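(* Let $k\neq0$ and $n\neq0,1$ be real and $p=4/n$. Consider the first-order system (the inversion-group resolving system) $$(2+n/2)G+xG_x-(n/2)(vG_v+\bar vG_{\bar v})+GH_v-HG_v+\bar GH_{\bar v}-\bar HG_{\bar v}=0,$$ $$iG+(2-n/2)H+xH_x-(n/2)(vH_v+\bar vH_{\bar v})-HH_v-\bar HH_{\bar v}=kv^{1+2/n}\bar v^{2/n}$$ for complex functions $G(x,v,\bar v)$, $H(x,v,\bar v)$. The following are phase-equivariant solutions ($C_j$ constants; upper/lower signs taken together): \begin{enumerate} \item $H=0$, $G=-ik|v|^{4/n}v$; \item $H=iC_1x^{-1}|v|^{2/n}v$, $G=\big(iC_1^2x^{-2}|v|^{4/n}+C_1nx^{-1}|v|^{2/n}-ik|v|^{4/n}\big)v$, with $C_1\neq0$; \item $H=\big(2/3\pm i\sqrt{-k}|v|^{3/2}\big)v$, $G=\big(\pm(8/3)\sqrt{-k}|v|^{3/2}-2ik|v|^3\big)v$, with $n=4/3$, $k<0$; \item $H=\big(2-n\pm\sqrt{-kn/(n+2)}|v|^{2/n}\big)v$, $G=0$, with $n^2-n-4=0$, $kn<0$; \item $H=\big(2-n\pm i\sqrt{k}|v|^{2/n}\big)v$, $G=0$, with $n^2-n-4=0$, $k>0$; \item $H=(C_1x^{-4}+k/4)|v|^{-1}v$, $G=0$, with $n=-4$; \item $H=\big((1+C_1x^6)^{-1}(6+(k/4)(C_2x^2-3)|v|^{-1})+(k/4)|v|^{-1}\big)v$, $G=0$, with $n=-4$; \item $H=\sqrt{C_1}\Big(x\big(C_2J_3(\sqrt{C_1}/x)+C_3Y_3(\sqrt{C_1}/x)\big)\Big)^{-1}\Big(\big(C_2J_2(\sqrt{C_1}/x)+C_3Y_2(\sqrt{C_1}/x)\big)\big(1+(k/C_1)x^2|v|^{-1}\big)+C_4|v|^{-1}\Big)v$,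 $G=iC_1x^{-2}v$, with $n=-4$, $C_1>0$; \item $H=\sqrt{C_1}\Big(x\big(C_2I_3(\sqrt{C_1}/x)+C_3e^{3i\pi}K_3(\sqrt{C_1}/x)\big)\Big)^{-1}\Big(\big(C_2I_2(\sqrt{C_1}/x)+C_3e^{2i\pi}K_2(\sqrt{C_1}/x)\big)\big(1-(k/C_1)x^2|v|^{-1}\big)+C_4|v|^{-1}\Big)v$, $G=-iC_1x^{-2}v$, with $n=-4$, $C_1>0$. \end{enumerate} Only solutions 4 through 7 satisfy $G=0$.
   Context: $i$ is the imaginary unit; $x$ is real and $v,\bar v$ are a complex-conjugate pair treated as independent variables; $\bar G,\bar H$ are complex conjugates of $G,H$. A solution is phase-equivariant if $G=g(x,|v|)v$, $H=h(x,|v|)v$. $J_\nu,Y_\nu$ are Bessel functions and $I_\nu,K_\nu$ modified Bessel functions. *)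

(* Defs.v *)
From Stdlib Require Import Reals Arith Factorial.
From Coquelicot Require Import Coquelicot.
Open Scope R_scope.

Definition Cdiff (f : R -> C) (t0 : R) : Prop :=
  ex_derive (fun t => Re (f t)) t0 /\ ex_derive (fun t => Im (f t)) t0.

Definition Cder (f : R -> C) (t0 : R) : C :=
  (Derive (fun t => Re (f t)) t0, Derive (fun t => Im (f t)) t0).

(* Functions F(x, v) with x real and v = a + i b complex.  Writing
   F(x,v,vbar) with v, vbar independent means the Wirtinger derivatives
   F_v = (F_a - i F_b)/2 and F_vbar = (F_a + i F_b)/2. *)
Definition Dx (F : R -> C -> C) (x : R) (v : C) : C := Cder (fun t => F t v) x.
Definition Da (F : R -> C -> C) (x : R) (v : C) : C :=
  Cder (fun t => F x (v + RtoC t)%C) 0.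
Definition Db (F : R -> C -> C) (x : R) (v : C) : C :=
  Cder (fun t => F x (v + Ci * RtoC t)%C) 0.
Definition Dv (F : R -> C -> C) (x : R) (v : C) : C :=
  (/ 2 * (Da F x v - Ci * Db F x v))%C.
Definition Dvb (F : R -> C -> C) (x : R) (v : C) : C :=
  (/ 2 * (Da F x v + Ci * Db F x v))%C.

Definition has_partials (F : R -> C -> C) (x : R) (v : C) : Prop :=
  Cdiff (fun t => F t v) x /\
  Cdiff (fun t => F x (v + RtoC t)%C) 0 /\
  Cdiff (fun t => F x (v + Ci * RtoC t)%C) 0.

Definition Fconj (F : R -> C -> C) : R -> C -> C := fun x v => Cconj (F x v).

Definition eq1_lhs (n : R) (G H : R -> C -> C) (x : R) (v : C) : C :=
  (RtoC (2 + n / 2) * G x v + RtoC x * Dx G x v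
   - RtoC (n / 2) * (v * Dv G x v + Cconj v * Dvb G x v)
   + G x v * Dv H x v - H x v * Dv G x v
   + Fconj G x v * Dvb H x v - Fconj H x v * Dvb G x v)%C.

Definition eq2_lhs (n : R) (G H : R -> C -> C) (x : R) (v : C) : C :=
  (Ci * G x v + RtoC (2 - n / 2) * H x v + RtoC x * Dx H x v
   - RtoC (n / 2) * (v * Dv H x v + Cconj v * Dvb H x v)
   - H x v * Dv H x v - Fconj H x v * Dvb H x v)%C.

(* right-hand side  k v^(1+2/n) vbar^(2/n) = k |v|^(4/n) v  *)
Definition eq2_rhs (n k : R) (v : C) : C :=
  (RtoC (k * Rpower (Cmod v) (4 / n)) * v)%C.

Definition solves (n k : R) (G H : R -> C -> C) (D : R -> C -> Prop) : Prop :=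
  forall x v, D x v ->
    has_partials G x v /\ has_partials H x v /\
    eq1_lhs n G H x v = 0%C /\ eq2_lhs n G H x v = eq2_rhs n k v.

Definition peq (f : R -> R -> C) : R -> C -> C := fun x v => (f x (Cmod v) * v)%C.

(** * Bessel functions of integer order (DLMF 10.2.2, 10.8.1, 10.25.2, 10.31.1) *)

Definition Euler_gamma : R :=
  real (Lim_seq (fun N => sum_f_R0 (fun j => / INR (S j)) N - ln (INR (S N)))).

Definition finite_sum (f : nat -> R) (N : nat) : R :=
  match N with O => 0 | S N' => sum_f_R0 f N' end.

(* digamma at positive integers:  psi(m+1) = -gamma + sum_{j=1}^m 1/j *)
Definition psi1 (m : nat) : R :=
  - Euler_gamma + finite_sum (fun j => / INR (S j)) m.

Definition BesselJ (nu : nat) (z : R) : R :=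
  Series (fun m => (-1) ^ m / (INR (fact m) * INR (fact (m + nu))) * (z / 2) ^ (2 * m + nu)).

Definition BesselI (nu : nat) (z : R) : R :=
  Series (fun m => / (INR (fact m) * INR (fact (m + nu))) * (z / 2) ^ (2 * m + nu)).

Definition BesselY (nu : nat) (z : R) : R :=
  - (/ (z / 2) ^ nu) / PI *
      finite_sum (fun j => INR (fact (nu - j - 1)) / INR (fact j) * (z ^ 2 / 4) ^ j) nu
  + 2 / PI * ln (z / 2) * BesselJ nu z
  - (z / 2) ^ nu / PI *
      Series (fun j => (psi1 j + psi1 (nu + j)) * (- z ^ 2 / 4) ^ j
                         / (INR (fact j) * INR (fact (nu + j)))).

Definition BesselK (nu : nat) (z : R) : R :=
  / 2 * / (z / 2) ^ nu *
      finite_sum (fun j => INR (fact (nu - j - 1)) / INR (fact j) * (- z ^ 2 / 4) ^ j) nu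
  + (-1) ^ (S nu) * ln (z / 2) * BesselI nu z
  + (-1) ^ nu * / 2 * (z / 2) ^ nu *
      Series (fun j => (psi1 j + psi1 (nu + j)) * (z ^ 2 / 4) ^ j
                         / (INR (fact j) * INR (fact (nu + j)))).

Definition Cexpi (t : R) : C := (cos t, sin t).

Definition G1 (n k : R) := peq (fun x r => (- Ci * RtoC (k * Rpower r (4 / n)))%C).
Definition H1 : R -> C -> C := fun _ _ => 0%C.
Definition D1 : R -> C -> Prop := fun x v => v <> 0%C.

Definition H2 (n C1 : R) := peq (fun x r => (Ci * RtoC (C1 / x * Rpower r (2 / n)))%C).
Definition G2 (n k C1 : R) := peq (fun x r =>
  (Ci * RtoC (C1 ^ 2 / x ^ 2 * Rpower r (4 / n)) + RtoC (C1 * n / x * Rpower r (2 / n))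
   - Ci * RtoC (k * Rpower r (4 / n)))%C).
Definition D2 : R -> C -> Prop := fun x v => x <> 0 /\ v <> 0%C.

(* 3  (n = 4/3, k < 0; s = +1 or -1 selects the upper/lower signs) *)
Definition H3 (k s : R) := peq (fun x r =>
  (RtoC (2 / 3) + Ci * RtoC (s * sqrt (- k) * Rpower r (3 / 2)))%C).
Definition G3 (k s : R) := peq (fun x r =>
  (RtoC (s * (8 / 3) * sqrt (- k) * Rpower r (3 / 2)) - Ci * RtoC (2 * k * r ^ 3))%C).
Definition D3 : R -> C -> Prop := fun x v => v <> 0%C.

Definition H4 (n k s : R) := peq (fun x r =>
  RtoC (2 - n + s * sqrt (- k * n / (n + 2)) * Rpower r (2 / n))).
Definition H5 (n k s : R) := peq (fun x r =>
  (RtoC (2 - n) + Ci * RtoC (s * sqrt k * Rpower r (2 / n)))%C).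
Definition H6 (k C1 : R) := peq (fun x r => RtoC ((C1 / x ^ 4 + k / 4) / r)).
Definition D6 : R -> C -> Prop := fun x v => x <> 0 /\ v <> 0%C.
Definition H7 (k C1 C2 : R) := peq (fun x r =>
  RtoC (/ (1 + C1 * x ^ 6) * (6 + k / 4 * (C2 * x ^ 2 - 3) / r) + k / 4 / r)).
Definition D7 (C1 : R) : R -> C -> Prop := fun x v => 1 + C1 * x ^ 6 <> 0 /\ v <> 0%C.

Definition Gzero : R -> C -> C := fun _ _ => 0%C.
Definition Dv0 : R -> C -> Prop := fun x v => v <> 0%C.

Definition den8 (C1 C2 C3 x : R) : R :=
  x * (C2 * BesselJ 3 (sqrt C1 / x) + C3 * BesselY 3 (sqrt C1 / x)).
Definition H8 (k C1 C2 C3 C4 : R) := peq (fun x r =>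
  RtoC (sqrt C1 / den8 C1 C2 C3 x *
        ((C2 * BesselJ 2 (sqrt C1 / x) + C3 * BesselY 2 (sqrt C1 / x))
           * (1 + k / C1 * x ^ 2 / r) + C4 / r))).
Definition G8 (C1 : R) := peq (fun x r => (Ci * RtoC (C1 / x ^ 2))%C).
Definition D8 (C1 C2 C3 : R) : R -> C -> Prop :=
  fun x v => 0 < x /\ v <> 0%C /\ den8 C1 C2 C3 x <> 0.

Definition den9 (C1 C2 C3 x : R) : C :=
  (RtoC x * (RtoC (C2 * BesselI 3 (sqrt C1 / x))
             + RtoC C3 * Cexpi (3 * PI) * RtoC (BesselK 3 (sqrt C1 / x))))%C.
Definition H9 (k C1 C2 C3 C4 : R) := peq (fun x r =>
  (RtoC (sqrt C1) / den9 C1 C2 C3 x *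
     ((RtoC (C2 * BesselI 2 (sqrt C1 / x))
       + RtoC C3 * Cexpi (2 * PI) * RtoC (BesselK 2 (sqrt C1 / x)))
        * RtoC (1 - k / C1 * x ^ 2 / r) + RtoC (C4 / r)))%C).
Definition G9 (C1 : R) := peq (fun x r => (- Ci * RtoC (C1 / x ^ 2))%C).
Definition D9 (C1 C2 C3 : R) : R -> C -> Prop :=
  fun x v => 0 < x /\ v <> 0%C /\ den9 C1 C2 C3 x <> 0%C.

Definition nowhere_zero (G : R -> C -> C) (D : R -> C -> Prop) : Prop :=
  forall x v, D x v -> G x v <> 0%C.

(* Main.v *)
Require Import Defs.
From Stdlib Require Import Reals Nsatz Lra Lia Arith Factorial FunctionalExtensionality.
From Coquelicot Require Import Coquelicot.
Open Scope R_scope.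
Set Bullet Behavior "Strict Subproofs".

Ltac nz := repeat match goal with
 | |- _ /\ _ => split
 | |- True => exact I
 | |- _ * _ <> 0 => apply Rmult_integral_contrapositive_currified
 | |- _ ^ _ <> 0 => apply pow_nonzero
 | |- / _ <> 0 => apply Rinv_neq_0_compat
 | |- 0 < _ => assumption
 | |- _ <> 0 => assumption
 | |- _ <> 0 => lra
 | |- 0 < _ => lra
 | |- 1 <> 0 => exact R1_neq_R0
 end.

Lemma Cder_is (f : R -> C) t0 (d : C) :
  is_derive (fun t => Re (f t)) t0 (Re d) -> is_derive (fun t => Im (f t)) t0 (Im d) ->
  Cdiff f t0 /\ Cder f t0 = d.
Proof.
  intros H1 H2. split. split; eexists; eauto.
  unfold Cder. apply injective_projections; simpl; apply is_derive_unique; auto.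
Qed.

Lemma cmod_pos (v : C) : v <> 0%C -> 0 < Cmod v.
Proof. intros H; apply (proj1 (Cmod_gt_0 v)); exact H. Qed.

Lemma dmul (P A : R -> R) t0 dP dA :
  is_derive P t0 dP -> is_derive A t0 dA ->
  is_derive (fun t => P t * A t) t0 (dP * A t0 + P t0 * dA).
Proof. intros. apply (is_derive_mult P A); auto. intros; apply Rmult_comm. Qed.

Lemma dsub (P A : R -> R) t0 dP dA :
  is_derive P t0 dP -> is_derive A t0 dA ->
  is_derive (fun t => P t - A t) t0 (dP - dA).
Proof. intros. apply (is_derive_minus P A); auto. Qed.

Lemma dadd (P A : R -> R) t0 dP dA :
  is_derive P t0 dP -> is_derive A t0 dA ->
  is_derive (fun t => P t + A t) t0 (dP + dA).
Proof. intros. apply (is_derive_plus P A); auto. Qed.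

Lemma is_derive_eq (f : R -> R) x d d' : is_derive f x d -> d = d' -> is_derive f x d'.
Proof. intros H ->; exact H. Qed.

Lemma dconst (c x : R) : is_derive (fun _ : R => c) x 0.
Proof. auto_derive; auto. Qed.

Lemma peq_derivs (f : R -> R -> C) (x : R) (v : C) (fx fr : C) :
  v <> 0%C ->
  is_derive (fun t => Re (f t (Cmod v))) x (Re fx) ->
  is_derive (fun t => Im (f t (Cmod v))) x (Im fx) ->
  is_derive (fun r => Re (f x r)) (Cmod v) (Re fr) ->
  is_derive (fun r => Im (f x r)) (Cmod v) (Im fr) ->
  has_partials (peq f) x v /\ Defs.Dx (peq f) x v = (fx * v)%C /\
  Dv (peq f) x v = (f x (Cmod v) + RtoC (Cmod v) * fr / 2)%C /\
  Dvb (peq f) x v = (fr * v * v / (2 * RtoC (Cmod v)))%C.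
Proof.
  intros hv hx1 hx2 hd1 hd2.
  destruct v as [a b].
  set (r := Cmod (a,b)) in *.
  assert (hr : 0 < r) by (apply cmod_pos; auto).
  assert (hr2 : r * r = a*a + b*b).
  { unfold r, Cmod; simpl. rewrite sqrt_sqrt. ring. nra. }
  assert (ca : is_derive (fun t => Cmod ((a,b) + RtoC t)%C) 0 (a / r)).
  { eapply is_derive_ext. intro t. unfold Cmod; simpl. reflexivity.
    auto_derive. simpl. replace ((a+0)^2 + (b+0)^2) with (r*r) by (rewrite hr2; ring). nra.
    simpl. replace ((a+0)^2 + (b+0)^2) with (r*r) by (rewrite hr2; ring).
    match goal with |- context [sqrt ?e] => replace (sqrt e) with r end.
    field. lra. rewrite <- (sqrt_square r) by lra. f_equal. rewrite hr2; ring. }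
  assert (cb : is_derive (fun t => Cmod ((a,b) + Ci * RtoC t)%C) 0 (b / r)).
  { eapply is_derive_ext. intro t. unfold Cmod; simpl. reflexivity.
    auto_derive. simpl. replace ((a+(0*0-1*0))^2 + (b+(0*0+1*0))^2) with (r*r) by (rewrite hr2; ring). nra.
    simpl.
    match goal with |- context [sqrt ?e] => replace (sqrt e) with r end.
    field. lra. rewrite <- (sqrt_square r) by lra. f_equal. rewrite hr2; ring. }
  assert (e0 : Cmod ((a,b) + RtoC 0)%C = r).
  { unfold r; f_equal; apply injective_projections; simpl; ring. }
  assert (e0' : Cmod ((a,b) + Ci * RtoC 0)%C = r).
  { unfold r; f_equal; apply injective_projections; simpl; ring. }
  assert (dRa : is_derive (fun t => Re (f x (Cmod ((a,b) + RtoC t)%C))) 0 ((a/r) * Re fr)).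
  { apply (is_derive_comp (fun r => Re (f x r))). rewrite e0; auto. auto. }
  assert (dIa : is_derive (fun t => Im (f x (Cmod ((a,b) + RtoC t)%C))) 0 ((a/r) * Im fr)).
  { apply (is_derive_comp (fun r => Im (f x r))). rewrite e0; auto. auto. }
  assert (dRb : is_derive (fun t => Re (f x (Cmod ((a,b) + Ci * RtoC t)%C))) 0 ((b/r) * Re fr)).
  { apply (is_derive_comp (fun r => Re (f x r))). rewrite e0'; auto. auto. }
  assert (dIb : is_derive (fun t => Im (f x (Cmod ((a,b) + Ci * RtoC t)%C))) 0 ((b/r) * Im fr)).
  { apply (is_derive_comp (fun r => Im (f x r))). rewrite e0'; auto. auto. }
  idtac.
  assert (la : is_derive (fun t : R => a + t) 0 1) by (auto_derive; auto; ring).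
  assert (lb : is_derive (fun t : R => b + 0) 0 0) by (auto_derive; auto; ring).
  assert (la' : is_derive (fun t : R => a + (0 * t - 1 * 0)) 0 0) by (auto_derive; auto; ring).
  assert (lb' : is_derive (fun t : R => b + (0 * 0 + 1 * t)) 0 1) by (auto_derive; auto; ring).
  set (u := Re (f x r)) in *. set (w := Im (f x r)) in *.
  assert (DA : Cdiff (fun t => peq f x ((a,b) + RtoC t)%C) 0 /\
     Cder (fun t => peq f x ((a,b) + RtoC t)%C) 0 =
       ((a/r) * Re fr * a + u - (a/r) * Im fr * b, (a/r) * Re fr * b + (a/r) * Im fr * a + w)).
  { apply Cder_is; simpl.
    - eapply is_derive_eq; [ eapply is_derive_ext; [ | exact (dsub _ _ _ _ _ (dmul _ _ _ _ _ dRa la) (dmul _ _ _ _ _ dIa lb))] | ].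
      + intro t; unfold peq; simpl; reflexivity.
      + simpl. rewrite e0. fold u w. ring.
    - eapply is_derive_eq; [ eapply is_derive_ext; [ | exact (dadd _ _ _ _ _ (dmul _ _ _ _ _ dRa lb) (dmul _ _ _ _ _ dIa la))] | ].
      + intro t; unfold peq; simpl; reflexivity.
      + simpl. rewrite e0. fold u w. ring. }
  assert (DB : Cdiff (fun t => peq f x ((a,b) + Ci * RtoC t)%C) 0 /\
     Cder (fun t => peq f x ((a,b) + Ci * RtoC t)%C) 0 =
       ((b/r) * Re fr * a - (b/r) * Im fr * b - w, (b/r) * Re fr * b + u + (b/r) * Im fr * a)).
  { apply Cder_is; simpl.
    - eapply is_derive_eq; [ eapply is_derive_ext; [ | exact (dsub _ _ _ _ _ (dmul _ _ _ _ _ dRb la') (dmul _ _ _ _ _ dIb lb'))] | ].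
      + intro t; unfold peq; simpl; reflexivity.
      + simpl. rewrite e0'. fold u w. ring.
    - eapply is_derive_eq; [ eapply is_derive_ext; [ | exact (dadd _ _ _ _ _ (dmul _ _ _ _ _ dRb lb') (dmul _ _ _ _ _ dIb la'))] | ].
      + intro t; unfold peq; simpl; reflexivity.
      + simpl. rewrite e0'. fold u w. ring. }
  assert (DX : Cdiff (fun t => peq f t (a,b)) x /\ Cder (fun t => peq f t (a,b)) x = (fx * (a,b))%C).
  { apply Cder_is; simpl.
    - eapply is_derive_eq; [ eapply is_derive_ext; [ | exact (dsub _ _ _ _ _ (dmul _ _ _ _ _ hx1 (dconst a x)) (dmul _ _ _ _ _ hx2 (dconst b x)))] | ].
      + intro t; unfold peq; simpl; reflexivity.
      + simpl. unfold Re, Im. ring.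
    - eapply is_derive_eq; [ eapply is_derive_ext; [ | exact (dadd _ _ _ _ _ (dmul _ _ _ _ _ hx1 (dconst b x)) (dmul _ _ _ _ _ hx2 (dconst a x)))] | ].
      + intro t; unfold peq; simpl; reflexivity.
      + simpl. unfold Re, Im. ring. }
  destruct DA as [DA1 DA2]. destruct DB as [DB1 DB2]. destruct DX as [DX1 DX2].
  assert (fe : f x r = (u, w)) by (unfold u, w; destruct (f x r); reflexivity).
  assert (ri : r * / r = 1) by (field; lra).
  set (ir := / r) in *. clearbody ir.
  assert (h2 : 2 * / 2 = 1) by field.
  split; [ split; [exact DX1 | split; [exact DA1 | exact DB1]] | ].
  split; [ exact DX2 | ].
  unfold Dv, Dvb, Da, Db. rewrite DA2, DB2. rewrite fe.
  destruct fr as [p q]. simpl.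
  split; apply injective_projections; simpl; unfold Rdiv. all: unfold Re, Im; simpl; clear - hr hr2. all: field_simplify_eq; [ | lra .. ]. all: try ring. all: replace (r^2) with (a*a+b*b) by (rewrite <- hr2; ring); ring.
Qed.

Definition E1 (n x r : R) (g gx gr h hx hr : C) : C :=
  (RtoC (2 + n/2) * g + RtoC x * gx - RtoC (n/2) * (g + RtoC r * gr)
   + (g * hr - h * gr) * RtoC r / 2 + (Cconj g * hr - Cconj h * gr) * RtoC r / 2)%C.
Definition E2 (n x r : R) (g gx gr h hx hr : C) : C :=
  (Ci * g + RtoC (2 - n/2) * h + RtoC x * hx - RtoC (n/2) * (h + RtoC r * hr)
   - h * (h + RtoC r * hr / 2) - Cconj h * hr * RtoC r / 2)%C.

Definition derivs (f : R -> R -> C) (x r : R) (fx fr : C) : Prop :=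
  is_derive (fun t => Re (f t r)) x (Re fx) /\
  is_derive (fun t => Im (f t r)) x (Im fx) /\
  is_derive (fun s => Re (f x s)) r (Re fr) /\
  is_derive (fun s => Im (f x s)) r (Im fr).

Lemma conj_eq (v : C) : v <> 0%C -> Cconj v = (RtoC (Cmod v) * RtoC (Cmod v) / v)%C.
Proof.
  intros hv. pose proof (Cmod2_conj v) as H.
  rewrite RtoC_pow in H. simpl in H. rewrite Cmult_1_r in H. rewrite H. field. auto.
Qed.

Lemma solves_peq n k (g h : R -> R -> C) (D : R -> C -> Prop) :
  (forall x v, D x v -> v <> 0%C /\ exists gx gr hx hr,
      derivs g x (Cmod v) gx gr /\ derivs h x (Cmod v) hx hr /\
      E1 n x (Cmod v) (g x (Cmod v)) gx gr (h x (Cmod v)) hx hr = 0%C /\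
      E2 n x (Cmod v) (g x (Cmod v)) gx gr (h x (Cmod v)) hx hr = RtoC (k * Rpower (Cmod v) (4 / n))) ->
  solves n k (peq g) (peq h) D.
Proof.
  intros HD x v hD. destruct (HD x v hD) as [hv [gx [gr [hx [hr [dg [dh [e1 e2]]]]]]]].
  destruct dg as [g1 [g2 [g3 g4]]]. destruct dh as [h1 [h2 [h3 h4]]].
  destruct (peq_derivs g x v gx gr hv g1 g2 g3 g4) as [pg [gX [gV gVb]]].
  destruct (peq_derivs h x v hx hr hv h1 h2 h3 h4) as [ph [hX [hV hVb]]].
  assert (hr0 : RtoC (Cmod v) <> 0%C).
  { intro H. apply RtoC_inj in H. pose proof (cmod_pos v hv). lra. }
  split; [exact pg | split; [exact ph | split]].
  - transitivity (E1 n x (Cmod v) (g x (Cmod v)) gx gr (h x (Cmod v)) hx hr * v)%C.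
    + unfold eq1_lhs, E1. rewrite gX, gV, gVb, hV, hVb. unfold Fconj, peq.
      rewrite !Cmult_conj. rewrite (conj_eq v hv). field. auto.
    + rewrite e1. apply Cmult_0_l.
  - unfold eq2_rhs. rewrite <- e2.
    unfold eq2_lhs, E2. rewrite hX, hV, hVb. unfold Fconj, peq.
    rewrite !Cmult_conj. rewrite (conj_eq v hv). field. auto.
Qed.

Lemma H1_peq : H1 = peq (fun _ _ => 0%C).
Proof.
  apply functional_extensionality; intro x; apply functional_extensionality; intro v.
  unfold H1, peq. symmetry. apply Cmult_0_l.
Qed.

Lemma sol1 n k (hn : n <> 0) : solves n k (G1 n k) H1 D1.
Proof.
  rewrite H1_peq. unfold G1. apply solves_peq. intros x v hv. split; [exact hv|].
  pose proof (cmod_pos v hv) as hr. set (r := Cmod v) in *.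
  exists 0%C, (0, - k * (4/n) * Rpower r (4/n) / r), 0%C, 0%C.
  refine (conj _ (conj _ (conj _ _))).
  - unfold derivs; refine (conj _ (conj _ (conj _ _))); simpl; unfold Rpower.
    all: eapply is_derive_eq; [auto_derive; auto | ]. all: simpl; try field; lra.
  - unfold derivs; refine (conj _ (conj _ (conj _ _))); simpl; auto_derive; auto; ring.
  - unfold E1. apply injective_projections; simpl; field; lra.
  - unfold E2. apply injective_projections; simpl; field; lra.
Qed.


Ltac dtac unf := unfold derivs; refine (conj _ (conj _ (conj _ _))); simpl; unf;
  auto_derive; nz; try solve [field; nz].

Lemma Rpower_double r a : 0 < r -> Rpower r (2 * a) = Rpower r a * Rpower r a.
Proof. intros. replace (2*a) with (a + a) by ring. apply Rpower_plus. Qed.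

Lemma sol2 n k C1 (hn : n <> 0) : C1 <> 0 -> solves n k (G2 n k C1) (H2 n C1) D2.
Proof.
  intros hC. unfold G2, H2. apply solves_peq. intros x v [hx hv]. split; [exact hv|].
  pose proof (cmod_pos v hv) as hr. set (r := Cmod v) in *.
  set (P := Rpower r (2/n)). set (Q := Rpower r (4/n)).
  exists (- C1 * n / x^2 * P, - 2 * C1^2 / x^3 * Q),
         (C1 * n / x * (2/n) * P / r, C1^2 / x^2 * (4/n) * Q / r - k * (4/n) * Q / r),
         (0, - C1 / x^2 * P), (0, C1 / x * (2/n) * P / r).
  assert (e4 : Q = P * P).
  { unfold P, Q. rewrite <- Rpower_double by auto. f_equal. field. auto. }
  refine (conj _ (conj _ (conj _ _))).
  - dtac ltac:(unfold P, Q, Rpower).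
  - dtac ltac:(unfold P, Q, Rpower).
  - unfold E1. apply injective_projections; simpl; rewrite e4; field; nz.
  - unfold E2. apply injective_projections; simpl; rewrite e4; field; nz.
Qed.

Lemma Rpower_m r : 0 < r -> Rpower r (4 / (4/3)) = r ^ 3.
Proof. intros. replace (4/(4/3)) with (INR 3) by (simpl; field). apply Rpower_pow; auto. Qed.

Lemma sol3 k s : k < 0 -> (s = 1 \/ s = -1) -> solves (4/3) k (G3 k s) (H3 k s) D3.
Proof.
  intros hk hs. unfold G3, H3. apply solves_peq. intros x v hv. split; [exact hv|].
  pose proof (cmod_pos v hv) as hr. set (r := Cmod v) in *.
  set (R := Rpower r (3/2)). set (S := sqrt (- k)).
  exists 0%C, (s * (8/3) * S * (3/2) * R / r, - (2 * k * (3 * r^2))), 0%C, (0, s * S * (3/2) * R / r).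
  assert (eR : R * R = r ^ 3).
  { unfold R. rewrite <- Rpower_double by auto. replace (2 * (3/2)) with (INR 3) by (simpl; field). apply Rpower_pow; auto. }
  assert (eS : S * S = - k) by (unfold S; apply sqrt_sqrt; lra).
  assert (es : s * s = 1) by (destruct hs as [-> | ->]; ring).
  rewrite Rpower_m by auto.
  refine (conj _ (conj _ (conj _ _))).
  - dtac ltac:(unfold R, Rpower).
  - dtac ltac:(unfold R, Rpower).
  - unfold E1. apply injective_projections; simpl; field_simplify_eq; nz.
    all: clearbody R S r; clear - eR eS es; cbn [pow] in *; nsatz.
  - unfold E2. apply injective_projections; simpl; field_simplify_eq; nz.
    all: clearbody R S r; clear - eR eS es; cbn [pow] in *; nsatz.
Qed.

Lemma Gzero_peq : Gzero = peq (fun _ _ => 0%C).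
Proof.
  apply functional_extensionality; intro x; apply functional_extensionality; intro v.
  unfold Gzero, peq. symmetry. apply Cmult_0_l.
Qed.

Lemma sol4 n k s (hn : n <> 0) : n ^ 2 - n - 4 = 0 -> k * n < 0 -> (s = 1 \/ s = -1) ->
  solves n k Gzero (H4 n k s) Dv0.
Proof.
  intros hq hkn hs. rewrite Gzero_peq. unfold H4. apply solves_peq. intros x v hv. split; [exact hv|].
  pose proof (cmod_pos v hv) as hr. set (r := Cmod v) in *.
  assert (hn2 : 0 < n + 2) by nra.
  set (P := Rpower r (2/n)). set (Q := Rpower r (4/n)). set (q := sqrt (- k * n / (n + 2))).
  assert (e4 : Q = P * P).
  { unfold P, Q. rewrite <- Rpower_double by auto. f_equal. field. auto. }
  assert (eqq : q * q * (n + 2) = - k * n).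
  { unfold q. rewrite sqrt_sqrt. field. lra. apply Rdiv_le_0_compat; lra. }
  assert (es : s * s = 1) by (destruct hs as [-> | ->]; ring).
  exists 0%C, 0%C, 0%C, (s * q * (2/n) * P / r, 0).
  refine (conj _ (conj _ (conj _ _))).
  - dtac ltac:(idtac).
  - dtac ltac:(unfold P, Q, Rpower).
  - unfold E1. apply injective_projections; simpl; field; nz.
  - unfold E2. apply injective_projections; simpl; rewrite ?e4; field_simplify_eq; nz.
    all: clearbody P Q q r; clear - eqq es hq; cbn [pow] in *; nsatz.
Qed.

Lemma sol5 n k s (hn : n <> 0) : n ^ 2 - n - 4 = 0 -> k > 0 -> (s = 1 \/ s = -1) ->
  solves n k Gzero (H5 n k s) Dv0.
Proof.
  intros hq hk hs. rewrite Gzero_peq. unfold H5. apply solves_peq. intros x v hv. split; [exact hv|].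
  pose proof (cmod_pos v hv) as hr. set (r := Cmod v) in *.
  set (P := Rpower r (2/n)). set (Q := Rpower r (4/n)). set (q := sqrt k).
  assert (e4 : Q = P * P).
  { unfold P, Q. rewrite <- Rpower_double by auto. f_equal. field. auto. }
  assert (eqq : q * q = k) by (unfold q; apply sqrt_sqrt; lra).
  assert (es : s * s = 1) by (destruct hs as [-> | ->]; ring).
  exists 0%C, 0%C, 0%C, (0, s * q * (2/n) * P / r).
  refine (conj _ (conj _ (conj _ _))).
  - dtac ltac:(idtac).
  - dtac ltac:(unfold P, Q, Rpower).
  - unfold E1. apply injective_projections; simpl; field; nz.
  - unfold E2. apply injective_projections; simpl; rewrite ?e4; field_simplify_eq; nz.
    all: clearbody P Q q r; clear - eqq es hq; cbn [pow] in *; nsatz.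
Qed.

Lemma Rpower_m4 r : 0 < r -> Rpower r (4 / -4) = / r.
Proof. intros. replace (4 / -4) with (- (1)) by field. rewrite Rpower_Ropp, Rpower_1; auto. Qed.

Lemma sol6 k C1 : solves (-4) k Gzero (H6 k C1) D6.
Proof.
  rewrite Gzero_peq. unfold H6. apply solves_peq. intros x v [hx hv]. split; [exact hv|].
  pose proof (cmod_pos v hv) as hr. set (r := Cmod v) in *.
  rewrite Rpower_m4 by auto.
  exists 0%C, 0%C, (- 4 * C1 / x^5 / r, 0), (- (C1 / x^4 + k/4) / r^2, 0).
  refine (conj _ (conj _ (conj _ _))).
  - dtac ltac:(idtac).
  - dtac ltac:(idtac).
  - unfold E1. apply injective_projections; simpl; field; nz.
  - unfold E2. apply injective_projections; simpl; field; nz.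
Qed.

Lemma sol7 k C1 C2 : solves (-4) k Gzero (H7 k C1 C2) (D7 C1).
Proof.
  rewrite Gzero_peq. unfold H7. apply solves_peq. intros x v [hx hv]. split; [exact hv|].
  pose proof (cmod_pos v hv) as hr. set (r := Cmod v) in *.
  rewrite Rpower_m4 by auto.
  exists 0%C, 0%C,
    (- (6 * C1 * x^5) / (1 + C1 * x^6)^2 * (6 + k/4 * (C2 * x^2 - 3) / r)
       + / (1 + C1 * x^6) * (k/4 * (2 * C2 * x) / r), 0),
    (/ (1 + C1 * x^6) * (- (k/4 * (C2 * x^2 - 3)) / r^2) - k/4 / r^2, 0).
  refine (conj _ (conj _ (conj _ _))).
  - dtac ltac:(idtac).
  - dtac ltac:(idtac).
  - unfold E1. apply injective_projections; simpl; field; nz.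
  - unfold E2. apply injective_projections; simpl; field; nz.
Qed.

Lemma sol_AB k c (A B : R -> R) (D : R -> C -> Prop) :
  (forall x v, D x v -> v <> 0%C /\ x <> 0 /\ exists dA dB, is_derive A x dA /\ is_derive B x dB /\
     - c / x^2 + 6 * A x + x * dA - A x ^ 2 = 0 /\ 4 * B x + x * dB - A x * B x = k) ->
  solves (-4) k (peq (fun x r => (Ci * RtoC (c / x^2))%C)) (peq (fun x r => RtoC (A x + B x / r))) D.
Proof.
  intros HD. apply solves_peq. intros x v hD.
  destruct (HD x v hD) as [hv [hx [dA [dB [hA [hB [e1 e2]]]]]]]. split; [exact hv|].
  pose proof (cmod_pos v hv) as hr. set (r := Cmod v) in *.
  rewrite Rpower_m4 by auto.
  exists (0, - 2 * c / x^3), 0%C, (dA + dB / r, 0), (- B x / r^2, 0).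
  refine (conj _ (conj _ (conj _ _))).
  - dtac ltac:(idtac).
  - unfold derivs; refine (conj _ (conj _ (conj _ _))); simpl.
    + apply (is_derive_plus A (fun t => B t / r)); auto.
      pose proof (dmul B (fun _ => / r) x dB 0 hB (dconst (/ r) x)) as K.
      eapply is_derive_eq; [eapply is_derive_ext; [| exact K] |].
      intro t. simpl. unfold Rdiv; ring. simpl. unfold Rdiv; ring.
    + auto_derive; auto.
    + auto_derive; nz. field; nz.
    + auto_derive; auto.
  - unfold E1. apply injective_projections; simpl; field; nz.
  - unfold E2. apply injective_projections; simpl.
    + replace c with (x^2 * (6 * A x + x * dA - A x ^ 2)).
      rewrite <- e2. field; nz.
      apply (Rmult_eq_reg_r (/ x^2)). 2: apply Rinv_neq_0_compat; nz. field_simplify; nz. lra.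
    + field; nz.
Qed.

Lemma cv_fact x : CV_disk (fun n => / INR (fact n)) x.
Proof.
  apply (CV_disk_DAlembert _ x 0).
  - intro n. apply Rinv_neq_0_compat, INR_fact_neq_0.
  - apply is_lim_seq_ext with (fun n => / INR (S n)).
    + intro n. rewrite fact_simpl, mult_INR. rewrite Rabs_pos_eq.
      field. split; [apply INR_fact_neq_0 | apply not_0_INR; lia].
      apply Rlt_le. unfold Rdiv. apply Rmult_lt_0_compat.
      apply Rinv_0_lt_compat. apply Rmult_lt_0_compat. apply lt_0_INR; lia. apply INR_fact_lt_0.
      apply Rinv_lt_0_compat || idtac. rewrite Rinv_inv. apply INR_fact_lt_0.
    + replace (Finite 0) with (Rbar_inv p_infty) by reflexivity.
      apply is_lim_seq_inv. apply is_lim_seq_incr_1 with (u := INR). apply is_lim_seq_INR. discriminate.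
  - left; reflexivity.
Qed.

Lemma cv_le (a b : nat -> R) x : (forall n, Rabs (a n) <= Rabs (b n)) -> CV_disk b x -> CV_disk a x.
Proof.
  intros H Hb. unfold CV_disk in *. apply (@ex_series_le R_AbsRing R_CompleteNormedModule _ (fun n => Rabs (b n * x ^ n))); auto.
  intro n. change (norm (Rabs (a n * x^n))) with (Rabs (Rabs (a n * x^n))).
  rewrite Rabs_Rabsolu, !Rabs_mult. apply Rmult_le_compat_r; auto. apply Rabs_pos.
Qed.

Lemma cv_radius_infty (a : nat -> R) : (forall x, CV_disk a x) -> forall x, Rbar_lt (Rabs x) (CV_radius a).
Proof.
  intros H x. unfold CV_radius. destruct (Lub_Rbar_correct (CV_disk a)) as [ub _].
  destruct (Lub_Rbar (CV_disk a)) as [r| |] eqn:E; simpl; auto.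
  - pose proof (ub (Rabs x + Rabs r + 1) (H _)). simpl in H0. pose proof (Rle_abs r). pose proof (Rabs_pos x). lra.
  - pose proof (ub 0 (H _)). simpl in H0. auto.
Qed.

Definition cc (s : R) (nu j : nat) : R := s ^ j / (INR (fact j) * INR (fact (j + nu))).
Definition bb (s : R) (nu j : nat) : R :=
  (psi1 j + psi1 (nu + j)) * s ^ j / (INR (fact j) * INR (fact (j + nu))).

Lemma psi1_S m : psi1 (S m) = psi1 m + / INR (S m).
Proof.
  unfold psi1. destruct m as [|m].
  - simpl. ring.
  - unfold finite_sum. rewrite tech5. ring.
Qed.

Lemma fs_bound m : 0 <= finite_sum (fun j => / INR (S j)) m <= INR m.
Proof.
  induction m as [|m IH].
  - simpl; lra.
  - assert (finite_sum (fun j => / INR (S j)) (S m) = finite_sum (fun j => / INR (S j)) m + / INR (S m)).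
    { destruct m; [simpl; ring | unfold finite_sum; rewrite tech5; ring]. }
    rewrite H.
    assert (0 < / INR (S m) <= 1).
    { split. apply Rinv_0_lt_compat, lt_0_INR; lia.
      rewrite <- Rinv_1. apply Rinv_le_contravar. lra. rewrite S_INR. pose proof (pos_INR m). lra. }
    rewrite S_INR in *. split; lra.
Qed.

Lemma psi1_bound m : Rabs (psi1 m) <= Rabs Euler_gamma + INR m.
Proof.
  unfold psi1. pose proof (fs_bound m).
  eapply Rle_trans. apply Rabs_triang. rewrite Rabs_Ropp. rewrite (Rabs_pos_eq (finite_sum _ _)) by lra. lra.
Qed.

Lemma fact_pos_INR n : 0 < INR (fact n).
Proof. apply INR_fact_lt_0. Qed.

Lemma abs_spow (s : R) j : (s = 1 \/ s = -1) -> Rabs (s ^ j) = 1.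
Proof. intros hs. rewrite <- RPow_abs. destruct hs as [-> | ->]; rewrite ?Rabs_R1, ?Rabs_m1 || (rewrite Rabs_Ropp, Rabs_R1); apply pow1. Qed.

Lemma cv_cc s nu x : (s = 1 \/ s = -1) -> CV_disk (cc s nu) x.
Proof.
  intros hs. apply (cv_le _ (fun n => / INR (fact n))); [| apply cv_fact].
  intro j. unfold cc. unfold Rdiv. rewrite !Rabs_mult, abs_spow by auto.
  pose proof (fact_pos_INR j). pose proof (fact_pos_INR (j + nu)).
  assert (1 <= INR (fact (j+nu))).
  { replace 1 with (INR 1) by reflexivity. apply le_INR. pose proof (lt_O_fact (j+nu)). lia. }
  rewrite Rabs_pos_eq by (apply Rlt_le, Rinv_0_lt_compat; nra).
  rewrite (Rabs_pos_eq (/ INR (fact j))) by (apply Rlt_le, Rinv_0_lt_compat; nra).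
  rewrite Rinv_mult. rewrite Rmult_1_l.
  rewrite <- (Rmult_1_r (/ INR (fact j))) at 2.
  apply Rmult_le_compat_l. apply Rlt_le, Rinv_0_lt_compat; lra.
  rewrite <- Rinv_1. apply Rinv_le_contravar; lra.
Qed.

Lemma cv_bb s nu x : (s = 1 \/ s = -1) -> (1 <= nu)%nat -> CV_disk (bb s nu) x.
Proof.
  intros hs hnu.
  set (K := 2 * Rabs Euler_gamma + INR nu + 2).
  apply (cv_le _ (PS_scal K (fun n => / INR (fact n)))); [| apply CV_disk_scal, cv_fact].
  intro j. unfold bb, PS_scal. change (scal K (/ INR (fact j))) with (K * / INR (fact j)).
  pose proof (fact_pos_INR j) as fj. pose proof (fact_pos_INR (j + nu)) as fjn.
  pose proof (Rabs_pos Euler_gamma).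
  assert (hK : 0 < K) by (unfold K; pose proof (pos_INR nu); lra).
  rewrite (Rabs_pos_eq (K * _)) by (apply Rlt_le, Rmult_lt_0_compat; auto; apply Rinv_0_lt_compat; auto).
  unfold Rdiv. rewrite !Rabs_mult, abs_spow by auto.
  rewrite (Rabs_pos_eq (/ _)) by (apply Rlt_le, Rinv_0_lt_compat; nra).
  assert (hp : Rabs (psi1 j + psi1 (nu + j)) <= 2 * Rabs Euler_gamma + INR nu + 2 * INR j).
  { eapply Rle_trans. apply Rabs_triang. pose proof (psi1_bound j). pose proof (psi1_bound (nu + j)).
    rewrite plus_INR in H1. lra. }
  assert (hf : INR (S j) * INR (fact j) <= INR (fact (j + nu))).
  { rewrite <- mult_INR. apply le_INR. rewrite <- fact_simpl. apply fact_le. lia. }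
  rewrite S_INR in hf.
  assert (hp2 : Rabs (psi1 j + psi1 (nu + j)) <= K * (INR j + 1)).
  { unfold K. pose proof (pos_INR j). pose proof (pos_INR nu). nra. }
  rewrite Rmult_1_r, Rinv_mult.
  apply Rle_trans with (K * (INR j + 1) * (/ INR (fact j) * / INR (fact (j + nu)))).
  - apply Rmult_le_compat_r; auto. apply Rlt_le, Rmult_lt_0_compat; apply Rinv_0_lt_compat; auto.
  - pose proof (pos_INR j).
    assert (f1 : 1 <= INR (fact j)).
    { replace 1 with (INR 1) by reflexivity. apply le_INR. pose proof (lt_O_fact j). lia. }
    apply Rle_trans with (K * (INR j + 1) * (/ INR (fact j) * / ((INR j + 1) * INR (fact j)))).
    + apply Rmult_le_compat_l. nra. apply Rmult_le_compat_l.
      apply Rlt_le, Rinv_0_lt_compat; auto. apply Rinv_le_contravar; auto. nra.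
    + replace (K * (INR j + 1) * (/ INR (fact j) * / ((INR j + 1) * INR (fact j))))
        with (K * / INR (fact j) * / INR (fact j)) by (field; lra).
      rewrite <- (Rmult_1_r (K * / INR (fact j))) at 2. apply Rmult_le_compat_l.
      apply Rlt_le, Rmult_lt_0_compat; auto. apply Rinv_0_lt_compat; auto.
      rewrite <- Rinv_1. apply Rinv_le_contravar; lra.
Qed.

Lemma fact_pos' n : INR (fact n) <> 0.
Proof. apply INR_fact_neq_0. Qed.

Lemma J1 s mu j : (INR (S mu) + INR j) * cc s (S mu) j = cc s mu j.
Proof.
  unfold cc. replace (fact (j + S mu)) with (S (j + mu) * fact (j + mu))%nat
    by (rewrite <- plus_n_Sm; reflexivity).
  rewrite mult_INR, !S_INR, plus_INR. pose proof (pos_INR j). pose proof (pos_INR mu).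
  field. repeat split; try apply fact_pos'; lra.
Qed.

Lemma J2 s nu j : INR (S j) * cc s nu (S j) = s * cc s (S nu) j.
Proof.
  unfold cc. replace (fact (S j + nu)) with (fact (j + S nu)) by (rewrite <- plus_n_Sm; reflexivity).
  replace (fact (S j)) with (S j * fact j)%nat by reflexivity.
  rewrite mult_INR. simpl pow. pose proof (pos_INR j).
  field. repeat split; try apply fact_pos'; rewrite ?S_INR; lra.
Qed.

Lemma B1 s mu j : (INR (S mu) + INR j) * bb s (S mu) j - cc s (S mu) j = bb s mu j.
Proof.
  unfold bb, cc. replace (fact (j + S mu)) with (S (j + mu) * fact (j + mu))%nat
    by (rewrite <- plus_n_Sm; reflexivity).
  replace (S mu + j)%nat with (S (mu + j)) by reflexivity. rewrite psi1_S.
  rewrite (Nat.add_comm mu j).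
  rewrite mult_INR, !S_INR, plus_INR. pose proof (pos_INR j). pose proof (pos_INR mu).
  field. repeat split; try apply fact_pos'; lra.
Qed.

Lemma B2 s nu j : cc s nu (S j) = INR (S j) * bb s nu (S j) - s * bb s (S nu) j.
Proof.
  unfold bb, cc. replace (fact (S j + nu)) with (fact (j + S nu)) by (rewrite <- plus_n_Sm; reflexivity).
  replace (fact (S j)) with (S j * fact j)%nat by reflexivity.
  replace (nu + S j)%nat with (S nu + j)%nat by lia.
  rewrite psi1_S. rewrite mult_INR. simpl pow. pose proof (pos_INR j).
  field. repeat split; try apply fact_pos'; rewrite ?S_INR; lra.
Qed.

Definition cvall (a : nat -> R) := forall x, CV_disk a x.

Lemma exps a y : cvall a -> ex_pseries a y.
Proof. intros H. apply CV_disk_correct, H. Qed.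

Lemma exps_d a y : cvall a -> ex_pseries (PS_derive a) y.
Proof. intros H. apply ex_pseries_derive, cv_radius_infty, H. Qed.

Lemma ps_minus a b y : ex_pseries a y -> ex_pseries b y ->
  PSeries (fun n => a n - b n) y = PSeries a y - PSeries b y.
Proof.
  intros Ha Hb. rewrite <- PSeries_minus by auto. apply PSeries_ext. intro n. reflexivity.
Qed.

Lemma ps_plus a b y : ex_pseries a y -> ex_pseries b y ->
  PSeries (fun n => a n + b n) y = PSeries a y + PSeries b y.
Proof.
  intros Ha Hb. rewrite <- PSeries_plus by auto. apply PSeries_ext. intro n. reflexivity.
Qed.

Lemma ps_scal c a y : PSeries (fun n => c * a n) y = c * PSeries a y.
Proof. rewrite <- PSeries_scal. apply PSeries_ext. intro n. reflexivity. Qed.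

Lemma ex_ps_scal c a y : ex_pseries a y -> ex_pseries (fun n => c * a n) y.
Proof. intros H. apply (ex_pseries_scal c a y) in H. exact H. apply Rmult_comm. Qed.

Lemma cv_cc' s nu : (s = 1 \/ s = -1) -> cvall (cc s nu).
Proof. intros hs x. apply cv_cc; auto. Qed.
Lemma cv_bb' s nu : (s = 1 \/ s = -1) -> (1 <= nu)%nat -> cvall (bb s nu).
Proof. intros hs h x. apply cv_bb; auto. Qed.

Lemma I1 s mu y : (s = 1 \/ s = -1) ->
  PSeries (cc s mu) y = INR (S mu) * PSeries (cc s (S mu)) y + y * PSeries (PS_derive (cc s (S mu))) y.
Proof.
  intros hs.
  assert (E : PSeries (cc s mu) y - INR (S mu) * PSeries (cc s (S mu)) y
              = PSeries (fun n => cc s mu n - INR (S mu) * cc s (S mu) n) y).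
  { rewrite ps_minus, ps_scal; auto. apply exps, cv_cc'; auto. apply ex_ps_scal, exps, cv_cc'; auto. }
  rewrite (PSeries_decr_1_aux (fun n => cc s mu n - INR (S mu) * cc s (S mu) n)) in E.
  - unfold PS_decr_1 in E.
    rewrite (PSeries_ext (fun n => cc s mu (S n) - INR (S mu) * cc s (S mu) (S n)) (PS_derive (cc s (S mu)))) in E.
    + lra.
    + intro n. unfold PS_derive. rewrite <- (J1 s mu (S n)). rewrite !S_INR. ring.
  - rewrite <- (J1 s mu 0). simpl INR. ring.
Qed.

Lemma I3 s nu y : PSeries (PS_derive (cc s nu)) y = s * PSeries (cc s (S nu)) y.
Proof.
  rewrite <- ps_scal. apply PSeries_ext. intro n. unfold PS_derive. apply J2.
Qed.

Lemma I2 s mu y : (s = 1 \/ s = -1) -> (1 <= mu)%nat ->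
  PSeries (bb s mu) y = INR (S mu) * PSeries (bb s (S mu)) y + y * PSeries (PS_derive (bb s (S mu))) y
     - PSeries (cc s (S mu)) y.
Proof.
  intros hs hmu.
  assert (E : PSeries (bb s mu) y - INR (S mu) * PSeries (bb s (S mu)) y + PSeries (cc s (S mu)) y
              = PSeries (fun n => bb s mu n - INR (S mu) * bb s (S mu) n + cc s (S mu) n) y).
  { rewrite ps_plus, ps_minus, ps_scal; auto.
    apply exps, cv_bb'; auto. apply ex_ps_scal, exps, cv_bb'; auto.
    apply (ex_pseries_minus (bb s mu)). apply exps, cv_bb'; auto. apply ex_ps_scal, exps, cv_bb'; auto.
    apply exps, cv_cc'; auto. }
  rewrite (PSeries_decr_1_aux (fun n => bb s mu n - INR (S mu) * bb s (S mu) n + cc s (S mu) n)) in E.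
  - unfold PS_decr_1 in E.
    rewrite (PSeries_ext (fun n => bb s mu (S n) - INR (S mu) * bb s (S mu) (S n) + cc s (S mu) (S n)) (PS_derive (bb s (S mu)))) in E.
    + lra.
    + intro n. unfold PS_derive. rewrite <- (B1 s mu (S n)). rewrite !S_INR. ring.
  - rewrite <- (B1 s mu 0). simpl INR. ring.
Qed.

Lemma I4 s nu y : (s = 1 \/ s = -1) -> (1 <= nu)%nat ->
  PSeries (cc s nu) y = cc s nu 0 + y * (PSeries (PS_derive (bb s nu)) y - s * PSeries (bb s (S nu)) y).
Proof.
  intros hs hnu.
  rewrite PSeries_decr_1 by (apply exps, cv_cc'; auto). f_equal. f_equal.
  rewrite <- ps_scal. rewrite <- ps_minus.
  - apply PSeries_ext. intro n. unfold PS_decr_1, PS_derive. apply B2.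
  - apply exps_d, cv_bb'; auto.
  - apply ex_ps_scal, exps, cv_bb'; auto.
Qed.

Lemma pow_split z m nu : (z/2)^(2*m+nu) = (z/2)^nu * (z^2/4)^m.
Proof. rewrite pow_add, pow_mult. replace ((z/2)^2) with (z^2/4) by field. ring. Qed.

Lemma J_repr nu z : BesselJ nu z = (z/2)^nu * PSeries (cc (-1) nu) (z^2/4).
Proof.
  unfold BesselJ. rewrite PSeries_eq, <- Series_scal_l. apply Series_ext. intro m.
  change (scal (pow_n (z ^ 2 / 4) m) (cc (-1) nu m)) with (pow_n (z ^ 2 / 4) m * cc (-1) nu m).
  replace (pow_n (z ^ 2 / 4) m) with ((z^2/4)^m) by (induction m; simpl; auto; rewrite IHm; reflexivity). unfold cc. rewrite pow_split. ring.
Qed.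

Lemma I_repr nu z : BesselI nu z = (z/2)^nu * PSeries (cc 1 nu) (z^2/4).
Proof.
  unfold BesselI. rewrite PSeries_eq, <- Series_scal_l. apply Series_ext. intro m.
  change (scal (pow_n (z ^ 2 / 4) m) (cc 1 nu m)) with (pow_n (z ^ 2 / 4) m * cc 1 nu m).
  replace (pow_n (z ^ 2 / 4) m) with ((z^2/4)^m) by (induction m; simpl; auto; rewrite IHm; reflexivity).
  unfold cc. rewrite pow_split, pow1. unfold Rdiv. ring.
Qed.

Lemma exd a y : cvall a -> ex_derive (PSeries a) y.
Proof. intros H. apply ex_derive_PSeries, cv_radius_infty, H. Qed.

Lemma Dps a y : cvall a -> Derive (PSeries a) y = PSeries (PS_derive a) y.
Proof. intros H. apply Derive_PSeries, cv_radius_infty, H. Qed.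

Lemma sm1 : ((-1) = 1 \/ (-1) = -1). Proof. right; reflexivity. Qed.
Lemma sp1 : ((1:R) = 1 \/ (1:R) = -1). Proof. left; reflexivity. Qed.

Lemma dJ3 z : z <> 0 -> is_derive (BesselJ 3) z (BesselJ 2 z - 3 / z * BesselJ 3 z).
Proof.
  intros hz.
  apply (is_derive_ext (fun t => (t/2)^3 * PSeries (cc (-1) 3) (t^2/4))).
  { intro t. symmetry. apply J_repr. }
  rewrite !J_repr.
  auto_derive.
  - apply exd, cv_cc', sm1.
  - rewrite Dps by (apply cv_cc', sm1). rewrite (I1 (-1) 2 (z^2/4) sm1).
    simpl INR. unfold Rdiv; cbn [pow]. field. auto.
Qed.

Lemma dJ2 z : z <> 0 -> is_derive (BesselJ 2) z (- BesselJ 3 z + 2 / z * BesselJ 2 z).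
Proof.
  intros hz.
  apply (is_derive_ext (fun t => (t/2)^2 * PSeries (cc (-1) 2) (t^2/4))).
  { intro t. symmetry. apply J_repr. }
  rewrite !J_repr.
  auto_derive.
  - apply exd, cv_cc', sm1.
  - rewrite Dps by (apply cv_cc', sm1). rewrite (I3 (-1) 2).
    unfold Rdiv; cbn [pow]. field. auto.
Qed.

Lemma dI3 z : z <> 0 -> is_derive (BesselI 3) z (BesselI 2 z - 3 / z * BesselI 3 z).
Proof.
  intros hz.
  apply (is_derive_ext (fun t => (t/2)^3 * PSeries (cc 1 3) (t^2/4))).
  { intro t. symmetry. apply I_repr. }
  rewrite !I_repr.
  auto_derive.
  - apply exd, cv_cc', sp1.
  - rewrite Dps by (apply cv_cc', sp1). rewrite (I1 1 2 (z^2/4) sp1).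
    simpl INR. unfold Rdiv; cbn [pow]. field. auto.
Qed.

Lemma dI2 z : z <> 0 -> is_derive (BesselI 2) z (BesselI 3 z + 2 / z * BesselI 2 z).
Proof.
  intros hz.
  apply (is_derive_ext (fun t => (t/2)^2 * PSeries (cc 1 2) (t^2/4))).
  { intro t. symmetry. apply I_repr. }
  rewrite !I_repr.
  auto_derive.
  - apply exd, cv_cc', sp1.
  - rewrite Dps by (apply cv_cc', sp1). rewrite (I3 1 2).
    unfold Rdiv; cbn [pow]. field. auto.
Qed.

Lemma pown_pow (x : R) m : pow_n x m = x ^ m.
Proof. induction m; simpl; auto; rewrite IHm; reflexivity. Qed.

Lemma bb_series s nu y :
  Series (fun j => (psi1 j + psi1 (nu + j)) * (s * y) ^ j / (INR (fact j) * INR (fact (nu + j))))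
  = PSeries (bb s nu) y.
Proof.
  rewrite PSeries_eq. apply Series_ext. intro j.
  change (scal (pow_n y j) (bb s nu j)) with (pow_n y j * bb s nu j).
  replace (pow_n y j) with (y ^ j) by (symmetry; apply pown_pow). unfold bb. rewrite Rpow_mult_distr, (Nat.add_comm nu j). unfold Rdiv. ring.
Qed.

Lemma Y_repr2 z : BesselY 2 z =
  - (/ (z/2)^2) / PI * (1 + z^2/4) + 2 / PI * ln (z/2) * ((z/2)^2 * PSeries (cc (-1) 2) (z^2/4))
  - (z/2)^2 / PI * PSeries (bb (-1) 2) (z^2/4).
Proof.
  unfold BesselY. rewrite J_repr.
  rewrite (Series_ext (fun j => (psi1 j + psi1 (2 + j)) * (- z ^ 2 / 4) ^ j / (INR (fact j) * INR (fact (2 + j))))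
    (fun j => (psi1 j + psi1 (2 + j)) * (-1 * (z^2/4)) ^ j / (INR (fact j) * INR (fact (2 + j)))))
    by (intro j; do 3 f_equal; field).
  rewrite bb_series.
  replace (finite_sum _ 2) with (1 + z^2/4) by (unfold finite_sum; simpl; field). ring.
Qed.

Lemma Y_repr3 z : BesselY 3 z =
  - (/ (z/2)^3) / PI * (2 + z^2/4 + (z^2/4)^2/2) + 2 / PI * ln (z/2) * ((z/2)^3 * PSeries (cc (-1) 3) (z^2/4))
  - (z/2)^3 / PI * PSeries (bb (-1) 3) (z^2/4).
Proof.
  unfold BesselY. rewrite J_repr.
  rewrite (Series_ext (fun j => (psi1 j + psi1 (3 + j)) * (- z ^ 2 / 4) ^ j / (INR (fact j) * INR (fact (3 + j))))
    (fun j => (psi1 j + psi1 (3 + j)) * (-1 * (z^2/4)) ^ j / (INR (fact j) * INR (fact (3 + j)))))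
    by (intro j; do 3 f_equal; field).
  rewrite bb_series.
  replace (finite_sum _ 3) with (2 + z^2/4 + (z^2/4)^2/2) by (unfold finite_sum; simpl; field). ring.
Qed.

Lemma K_repr2 z : BesselK 2 z =
  / 2 * / (z/2)^2 * (1 - z^2/4) - ln (z/2) * ((z/2)^2 * PSeries (cc 1 2) (z^2/4))
  + / 2 * (z/2)^2 * PSeries (bb 1 2) (z^2/4).
Proof.
  unfold BesselK. rewrite I_repr.
  rewrite (Series_ext (fun j => (psi1 j + psi1 (2 + j)) * (z ^ 2 / 4) ^ j / (INR (fact j) * INR (fact (2 + j))))
    (fun j => (psi1 j + psi1 (2 + j)) * (1 * (z^2/4)) ^ j / (INR (fact j) * INR (fact (2 + j)))))
    by (intro j; do 3 f_equal; ring).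
  rewrite bb_series.
  replace (finite_sum _ 2) with (1 - z^2/4) by (unfold finite_sum; simpl; field). simpl pow. ring.
Qed.

Lemma K_repr3 z : BesselK 3 z =
  / 2 * / (z/2)^3 * (2 - z^2/4 + (z^2/4)^2/2) + ln (z/2) * ((z/2)^3 * PSeries (cc 1 3) (z^2/4))
  - / 2 * (z/2)^3 * PSeries (bb 1 3) (z^2/4).
Proof.
  unfold BesselK. rewrite I_repr.
  rewrite (Series_ext (fun j => (psi1 j + psi1 (3 + j)) * (z ^ 2 / 4) ^ j / (INR (fact j) * INR (fact (3 + j))))
    (fun j => (psi1 j + psi1 (3 + j)) * (1 * (z^2/4)) ^ j / (INR (fact j) * INR (fact (3 + j)))))
    by (intro j; do 3 f_equal; ring).
  rewrite bb_series.
  replace (finite_sum _ 3) with (2 - z^2/4 + (z^2/4)^2/2) by (unfold finite_sum; simpl; field). simpl pow. ring.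
Qed.


Lemma PI_nz : PI <> 0.
Proof. pose proof PI_RGT_0; lra. Qed.

Lemma dY3 z : 0 < z -> is_derive (BesselY 3) z (BesselY 2 z - 3 / z * BesselY 3 z).
Proof.
  intros hz.
  eapply is_derive_ext. { intro t. symmetry. apply Y_repr3. }
  rewrite Y_repr2, Y_repr3. pose proof PI_nz.
  auto_derive.
  - repeat split; try (apply exd; first [apply cv_cc' | apply cv_bb']; auto; try apply sm1); try lra.
    all: nz.
  - rewrite !Dps by (first [apply cv_cc' | apply cv_bb']; auto; try apply sm1).
    rewrite (I1 (-1) 2 (z^2/4) sm1). rewrite (I2 (-1) 2 (z^2/4) sm1) by lia.
    simpl INR. unfold Rdiv; cbn [pow]. field. lra.
Qed.

Lemma cc_m1_2_0 : cc (-1) 2 0 = / 2.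
Proof. unfold cc. simpl. field. Qed.
Lemma cc_1_2_0 : cc 1 2 0 = / 2.
Proof. unfold cc. simpl. field. Qed.

Lemma dY2 z : 0 < z -> is_derive (BesselY 2) z (- BesselY 3 z + 2 / z * BesselY 2 z).
Proof.
  intros hz.
  eapply is_derive_ext. { intro t. symmetry. apply Y_repr2. }
  rewrite Y_repr2, Y_repr3. pose proof PI_nz.
  auto_derive.
  - repeat split; try (apply exd; first [apply cv_cc' | apply cv_bb']; auto; try apply sm1); try lra.
    all: nz.
  - rewrite !Dps by (first [apply cv_cc' | apply cv_bb']; auto; try apply sm1).
    unfold Rdiv; cbn [pow]. set (y := z * (z * 1) * / 4).
    rewrite (I3 (-1) 2). rewrite (I4 (-1) 2 y sm1) by lia. rewrite cc_m1_2_0.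
    unfold y. field. lra.
Qed.

Lemma dK3 z : 0 < z -> is_derive (BesselK 3) z (- BesselK 2 z - 3 / z * BesselK 3 z).
Proof.
  intros hz.
  eapply is_derive_ext. { intro t. symmetry. apply K_repr3. }
  rewrite K_repr2, K_repr3.
  auto_derive.
  - repeat split; try (apply exd; first [apply cv_cc' | apply cv_bb']; auto; try apply sp1); try lra.
    all: nz.
  - rewrite !Dps by (first [apply cv_cc' | apply cv_bb']; auto; try apply sp1).
    rewrite (I1 1 2 (z^2/4) sp1). rewrite (I2 1 2 (z^2/4) sp1) by lia.
    simpl INR. unfold Rdiv; cbn [pow]. field. lra.
Qed.

Lemma dK2 z : 0 < z -> is_derive (BesselK 2) z (- BesselK 3 z + 2 / z * BesselK 2 z).
Proof.
  intros hz.
  eapply is_derive_ext. { intro t. symmetry. apply K_repr2. }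
  rewrite K_repr2, K_repr3.
  auto_derive.
  - repeat split; try (apply exd; first [apply cv_cc' | apply cv_bb']; auto; try apply sp1); try lra.
    all: nz.
  - rewrite !Dps by (first [apply cv_cc' | apply cv_bb']; auto; try apply sp1).
    unfold Rdiv; cbn [pow]. set (y := z * (z * 1) * / 4).
    rewrite (I3 1 2). rewrite (I4 1 2 y sp1) by lia. rewrite cc_1_2_0.
    unfold y. field. lra.
Qed.

Definition Z2J C2 C3 w := C2 * BesselJ 2 w + C3 * BesselY 2 w.
Definition Z3J C2 C3 w := C2 * BesselJ 3 w + C3 * BesselY 3 w.

Lemma dZ3J C2 C3 w : 0 < w -> is_derive (Z3J C2 C3) w (Z2J C2 C3 w - 3 / w * Z3J C2 C3 w).
Proof.
  intros hw. unfold Z3J, Z2J.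
  eapply is_derive_eq.
  apply (is_derive_plus (fun w => C2 * BesselJ 3 w) (fun w => C3 * BesselY 3 w)).
  apply (dmul (fun _ => C2) (BesselJ 3) w 0 _ (dconst C2 w) (dJ3 w ltac:(lra))).
  apply (dmul (fun _ => C3) (BesselY 3) w 0 _ (dconst C3 w) (dY3 w hw)).
  simpl. unfold plus; simpl. ring.
Qed.

Lemma dZ2J C2 C3 w : 0 < w -> is_derive (Z2J C2 C3) w (- Z3J C2 C3 w + 2 / w * Z2J C2 C3 w).
Proof.
  intros hw. unfold Z3J, Z2J.
  eapply is_derive_eq.
  apply (is_derive_plus (fun w => C2 * BesselJ 2 w) (fun w => C3 * BesselY 2 w)).
  apply (dmul (fun _ => C2) (BesselJ 2) w 0 _ (dconst C2 w) (dJ2 w ltac:(lra))).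
  apply (dmul (fun _ => C3) (BesselY 2) w 0 _ (dconst C3 w) (dY2 w hw)).
  simpl. unfold plus; simpl. ring.
Qed.

Lemma ric (Z2 Z3 : R -> R) (sg q c C1 C4 k x : R) :
  0 < C1 -> 0 < x -> Z3 (sqrt C1 / x) <> 0 -> sg * sg = 1 -> q * C1 = - sg * k -> c = - sg * C1 ->
  is_derive Z3 (sqrt C1 / x) (Z2 (sqrt C1 / x) - 3 / (sqrt C1 / x) * Z3 (sqrt C1 / x)) ->
  is_derive Z2 (sqrt C1 / x) (sg * Z3 (sqrt C1 / x) + 2 / (sqrt C1 / x) * Z2 (sqrt C1 / x)) ->
  exists dA dB,
    is_derive (fun x => sqrt C1 / (x * Z3 (sqrt C1 / x)) * Z2 (sqrt C1 / x)) x dA /\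
    is_derive (fun x => sqrt C1 / (x * Z3 (sqrt C1 / x)) * (Z2 (sqrt C1 / x) * (q * x^2) + C4)) x dB /\
    - c / x^2 + 6 * (sqrt C1 / (x * Z3 (sqrt C1 / x)) * Z2 (sqrt C1 / x)) + x * dA
      - (sqrt C1 / (x * Z3 (sqrt C1 / x)) * Z2 (sqrt C1 / x)) ^ 2 = 0 /\
    4 * (sqrt C1 / (x * Z3 (sqrt C1 / x)) * (Z2 (sqrt C1 / x) * (q * x^2) + C4)) + x * dB
      - (sqrt C1 / (x * Z3 (sqrt C1 / x)) * Z2 (sqrt C1 / x))
        * (sqrt C1 / (x * Z3 (sqrt C1 / x)) * (Z2 (sqrt C1 / x) * (q * x^2) + C4)) = k.
Proof.
  intros hC hx hZ hs hq hc d3 d2.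
  assert (hsC : 0 < sqrt C1) by (apply sqrt_lt_R0; auto).
  eexists; eexists. split; [|split; [|split]].
  - auto_derive. repeat split; try (eexists; eauto); nz. reflexivity.
  - auto_derive. repeat split; try (eexists; eauto); nz. reflexivity.
  - unfold Rdiv in *. set (s := sqrt C1) in *. set (w := s * / x) in *.
    replace (Derive (fun x0 : R => Z3 x0) w) with (Z2 w - 3 * / w * Z3 w) by (symmetry; apply is_derive_unique; exact d3).
    replace (Derive (fun x0 : R => Z2 x0) w) with (sg * Z3 w + 2 * / w * Z2 w) by (symmetry; apply is_derive_unique; exact d2).
    assert (hs2 : C1 = s * s) by (unfold s; rewrite sqrt_sqrt; lra).
    assert (hw : w <> 0) by (unfold w; nz).
    unfold w. subst c. rewrite hs2. field. nz.
  - unfold Rdiv in *. set (s := sqrt C1) in *. set (w := s * / x) in *.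
    replace (Derive (fun x0 : R => Z3 x0) w) with (Z2 w - 3 * / w * Z3 w) by (symmetry; apply is_derive_unique; exact d3).
    replace (Derive (fun x0 : R => Z2 x0) w) with (sg * Z3 w + 2 * / w * Z2 w) by (symmetry; apply is_derive_unique; exact d2).
    assert (hs2 : C1 = s * s) by (unfold s; rewrite sqrt_sqrt; lra).
    assert (hw : w <> 0) by (unfold w; nz).
    assert (hk : k = - sg * (q * C1)) by (rewrite hq; replace (- sg * (- sg * k)) with ((sg * sg) * k) by ring; rewrite hs; ring).
    rewrite hk. rewrite hs2. unfold w. field_simplify_eq; [| nz].
    set (a := Z2 (s * / x)) in *. set (b := Z3 (s * / x)) in *. clearbody a b s.
    clear - hs. cbn [pow] in *. nsatz.
Qed.

Lemma H8_eq k C1 C2 C3 C4 : H8 k C1 C2 C3 C4 =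
  peq (fun x r => RtoC (sqrt C1 / (x * Z3J C2 C3 (sqrt C1 / x)) * Z2J C2 C3 (sqrt C1 / x)
       + sqrt C1 / (x * Z3J C2 C3 (sqrt C1 / x)) * (Z2J C2 C3 (sqrt C1 / x) * (k / C1 * x^2) + C4) / r)).
Proof.
  apply functional_extensionality; intro x; apply functional_extensionality; intro v.
  unfold H8, peq, den8, Z2J, Z3J. f_equal. f_equal. unfold Rdiv. ring.
Qed.

Lemma sol8 k C1 C2 C3 C4 : C1 > 0 -> solves (-4) k (G8 C1) (H8 k C1 C2 C3 C4) (D8 C1 C2 C3).
Proof.
  intros hC. rewrite H8_eq. unfold G8. apply sol_AB.
  intros x v [hx [hv hd]]. split; [exact hv|]. split; [lra|].
  assert (hw : 0 < sqrt C1 / x) by (apply Rdiv_lt_0_compat; auto; apply sqrt_lt_R0; lra).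
  apply (ric _ _ (-1)); auto.
  - unfold den8 in hd. intro H. apply hd. unfold Z3J in H. rewrite H. ring.
  - ring.
  - field. lra.
  - ring.
  - apply dZ3J; auto.
  - eapply is_derive_eq. apply dZ2J; auto. match goal with |- ?a = ?b => change (@eq R a b) end. ring.
Qed.

Definition Z2K C2 C3 w := C2 * BesselI 2 w + C3 * BesselK 2 w.
Definition Z3K C2 C3 w := C2 * BesselI 3 w - C3 * BesselK 3 w.

Lemma dZ3K C2 C3 w : 0 < w -> is_derive (Z3K C2 C3) w (Z2K C2 C3 w - 3 / w * Z3K C2 C3 w).
Proof.
  intros hw. unfold Z3K, Z2K.
  eapply is_derive_eq.
  apply (is_derive_minus (fun w => C2 * BesselI 3 w) (fun w => C3 * BesselK 3 w)).
  apply (dmul (fun _ => C2) (BesselI 3) w 0 _ (dconst C2 w) (dI3 w ltac:(lra))).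
  apply (dmul (fun _ => C3) (BesselK 3) w 0 _ (dconst C3 w) (dK3 w hw)).
  simpl. unfold minus, plus, opp; simpl. field. lra.
Qed.

Lemma dZ2K C2 C3 w : 0 < w -> is_derive (Z2K C2 C3) w (1 * Z3K C2 C3 w + 2 / w * Z2K C2 C3 w).
Proof.
  intros hw. unfold Z3K, Z2K.
  eapply is_derive_eq.
  apply (is_derive_plus (fun w => C2 * BesselI 2 w) (fun w => C3 * BesselK 2 w)).
  apply (dmul (fun _ => C2) (BesselI 2) w 0 _ (dconst C2 w) (dI2 w ltac:(lra))).
  apply (dmul (fun _ => C3) (BesselK 2) w 0 _ (dconst C3 w) (dK2 w hw)).
  simpl. unfold plus; simpl. field. lra.
Qed.

Lemma Cexpi3 : Cexpi (3 * PI) = RtoC (-1).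
Proof.
  unfold Cexpi. replace (3 * PI) with (PI + 2 * PI) by ring.
  rewrite cos_plus, sin_plus, cos_2PI, sin_2PI, cos_PI, sin_PI.
  apply injective_projections; simpl; ring.
Qed.

Lemma Cexpi2 : Cexpi (2 * PI) = RtoC 1.
Proof. unfold Cexpi. rewrite cos_2PI, sin_2PI. reflexivity. Qed.

Lemma Cdiv_R a d : (RtoC a / RtoC d)%C = RtoC (a / d).
Proof.
  destruct (Req_dec d 0) as [-> | hd].
  - unfold Rdiv. rewrite Rinv_0. apply injective_projections; simpl;
    replace (0 * (0 * 1) + 0 * (0 * 1)) with 0 by ring; rewrite ?Rinv_0; unfold Rdiv; rewrite ?Rinv_0; ring.
  - rewrite RtoC_div by auto. reflexivity.
Qed.

Lemma den9_eq C1 C2 C3 x : den9 C1 C2 C3 x = RtoC (x * Z3K C2 C3 (sqrt C1 / x)).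
Proof.
  unfold den9, Z3K. rewrite Cexpi3. apply injective_projections; simpl; ring.
Qed.

Lemma H9_eq k C1 C2 C3 C4 : H9 k C1 C2 C3 C4 =
  peq (fun x r => RtoC (sqrt C1 / (x * Z3K C2 C3 (sqrt C1 / x)) * Z2K C2 C3 (sqrt C1 / x)
       + sqrt C1 / (x * Z3K C2 C3 (sqrt C1 / x)) * (Z2K C2 C3 (sqrt C1 / x) * (- k / C1 * x^2) + C4) / r)).
Proof.
  apply functional_extensionality; intro x; apply functional_extensionality; intro v.
  unfold H9, peq. f_equal. rewrite den9_eq, Cexpi2, Cdiv_R.
  apply injective_projections; simpl; unfold Z2K, Rdiv; ring.
Qed.

Lemma G9_eq C1 : G9 C1 = peq (fun x r => (Ci * RtoC (- C1 / x ^ 2))%C).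
Proof.
  apply functional_extensionality; intro x; apply functional_extensionality; intro v.
  unfold G9, peq. f_equal. apply injective_projections; simpl; unfold Rdiv; ring.
Qed.

Lemma sol9 k C1 C2 C3 C4 : C1 > 0 -> solves (-4) k (G9 C1) (H9 k C1 C2 C3 C4) (D9 C1 C2 C3).
Proof.
  intros hC. rewrite H9_eq, G9_eq. apply sol_AB.
  intros x v [hx [hv hd]]. split; [exact hv|]. split; [lra|].
  assert (hw : 0 < sqrt C1 / x) by (apply Rdiv_lt_0_compat; auto; apply sqrt_lt_R0; lra).
  apply (ric _ _ 1); auto.
  - rewrite den9_eq in hd. intro H. apply hd. rewrite H. f_equal. ring.
  - ring.
  - field. lra.
  - ring.
  - apply dZ3K; auto.
  - apply dZ2K; auto.
Qed.

Lemma peq_nz (f : R -> R -> C) x v : f x (Cmod v) <> 0%C -> v <> 0%C -> peq f x v <> 0%C.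
Proof. intros. unfold peq. apply Cmult_neq_0; auto. Qed.

Lemma Cnz_im (c : C) : Im c <> 0 -> c <> 0%C.
Proof. intros H E. apply H. rewrite E. reflexivity. Qed.
Lemma Cnz_re (c : C) : Re c <> 0 -> c <> 0%C.
Proof. intros H E. apply H. rewrite E. reflexivity. Qed.

Lemma Rpower_pos' r a : 0 < Rpower r a.
Proof. unfold Rpower. apply exp_pos. Qed.

Lemma nz1 n k : k <> 0 -> nowhere_zero (G1 n k) D1.
Proof.
  intros hk x v hv. unfold G1. apply peq_nz; auto. apply Cnz_im. simpl.
  pose proof (Rpower_pos' (Cmod v) (4/n)). nra.
Qed.

Lemma nz2 n k C1 : n <> 0 -> C1 <> 0 -> nowhere_zero (G2 n k C1) D2.
Proof.
  intros hn hC x v [hx hv]. unfold G2. apply peq_nz; auto. apply Cnz_re. simpl.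
  pose proof (Rpower_pos' (Cmod v) (2/n)).
  match goal with |- ?e <> 0 => replace e with (C1 * n / x * Rpower (Cmod v) (2 / n)) by ring end.
  apply Rmult_integral_contrapositive_currified; [|lra].
  unfold Rdiv. apply Rmult_integral_contrapositive_currified; [|apply Rinv_neq_0_compat; auto].
  apply Rmult_integral_contrapositive_currified; auto.
Qed.

Lemma nz3 k s : k < 0 -> (s = 1 \/ s = -1) -> nowhere_zero (G3 k s) D3.
Proof.
  intros hk hs x v hv. unfold G3. apply peq_nz; auto. apply Cnz_re. simpl.
  pose proof (Rpower_pos' (Cmod v) (3/2)).
  assert (0 < sqrt (- k)) by (apply sqrt_lt_R0; lra).
  match goal with |- ?e <> 0 => replace e with (s * ((8 / 3) * sqrt (- k) * Rpower (Cmod v) (3 / 2))) by ring end.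
  apply Rmult_integral_contrapositive_currified. destruct hs; lra.
  assert (0 < 8/3 * sqrt (-k) * Rpower (Cmod v) (3/2)).
  { apply Rmult_lt_0_compat; auto. apply Rmult_lt_0_compat; auto; lra. }
  lra.
Qed.

Lemma nz8 C1 C2 C3 : C1 > 0 -> nowhere_zero (G8 C1) (D8 C1 C2 C3).
Proof.
  intros hC x v [hx [hv _]]. unfold G8. apply peq_nz; auto. apply Cnz_im. simpl.
  assert (0 < C1 / (x * (x * 1))) by (apply Rdiv_lt_0_compat; [lra | nra]). intro E. lra.
Qed.

Lemma nz9 C1 C2 C3 : C1 > 0 -> nowhere_zero (G9 C1) (D9 C1 C2 C3).
Proof.
  intros hC x v [hx [hv _]]. unfold G9. apply peq_nz; auto. apply Cnz_im. simpl.
  assert (0 < C1 / (x * (x * 1))) by (apply Rdiv_lt_0_compat; [lra | nra]). intro E. lra.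
Qed.

Theorem proposition4p3 (n k : R) (hk : k <> 0) (hn0 : n <> 0) (hn1 : n <> 1) :
  (* 1 *)
  solves n k (G1 n k) H1 D1 /\
  (* 2 *)
  (forall C1 : R, C1 <> 0 -> solves n k (G2 n k C1) (H2 n C1) D2) /\
  (* 3 *)
  (n = 4 / 3 -> k < 0 -> forall s : R, (s = 1 \/ s = -1) ->
     solves n k (G3 k s) (H3 k s) D3) /\
  (* 4 *)
  (n ^ 2 - n - 4 = 0 -> k * n < 0 -> forall s : R, (s = 1 \/ s = -1) ->
     solves n k Gzero (H4 n k s) Dv0) /\
  (* 5 *)
  (n ^ 2 - n - 4 = 0 -> k > 0 -> forall s : R, (s = 1 \/ s = -1) ->
     solves n k Gzero (H5 n k s) Dv0) /\
  (* 6 *)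
  (n = -4 -> forall C1 : R, solves n k Gzero (H6 k C1) D6) /\
  (* 7 *)
  (n = -4 -> forall C1 C2 : R, solves n k Gzero (H7 k C1 C2) (D7 C1)) /\
  (* 8 *)
  (n = -4 -> forall C1 C2 C3 C4 : R, C1 > 0 ->
     solves n k (G8 C1) (H8 k C1 C2 C3 C4) (D8 C1 C2 C3)) /\
  (* 9 *)
  (n = -4 -> forall C1 C2 C3 C4 : R, C1 > 0 ->
     solves n k (G9 C1) (H9 k C1 C2 C3 C4) (D9 C1 C2 C3)) /\
  (* only solutions 4-7 have G = 0: in 1, 2, 3, 8, 9 the function G vanishes nowhere *)
  nowhere_zero (G1 n k) D1 /\
  (forall C1 : R, C1 <> 0 -> nowhere_zero (G2 n k C1) D2) /\
  (n = 4 / 3 -> k < 0 -> forall s : R, (s = 1 \/ s = -1) -> nowhere_zero (G3 k s) D3) /\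
  (forall C1 C2 C3 : R, C1 > 0 -> nowhere_zero (G8 C1) (D8 C1 C2 C3)) /\
  (forall C1 C2 C3 : R, C1 > 0 -> nowhere_zero (G9 C1) (D9 C1 C2 C3)).
Proof.
  split; [apply sol1; auto|].
  split; [intros; apply sol2; auto|].
  split; [intros -> ? ? ?; apply sol3; auto|].
  split; [intros; apply sol4; auto|].
  split; [intros; apply sol5; auto|].
  split; [intros ->; apply sol6|].
  split; [intros ->; apply sol7|].
  split; [intros -> ? ? ? ? ?; apply sol8; auto|].
  split; [intros -> ? ? ? ? ?; apply sol9; auto|].
  split; [apply nz1; auto|].
  split; [intros; apply nz2; auto|].
  split; [intros ? ? ?; apply nz3; auto|].
  split; [intros; apply nz8; auto|].
  intros; apply nz9; auto.
Qed.
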